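(* Let $N=(P,T,F,I,O)$ be a pWF net such that no output place has an outgoing edge, i.e. $p\bullet=\emptyset$ for all $p\in O$. Then $N$ is $*$-sound if and only if $N$ is sub-sound.
   Context: Petri nets and markings. A Petri net is a triple $(P,T,F)$ with $P$ a finite set of places, $T$ a finite set of transitions, $P\cap T=\emptyset$, and $F\subseteq (P\times T)\cup(T\times P)$. For a node $x$, $\bullet x=\{y\mid (y,x)\in F\}$, $x\bullet=\{y\mid (x,y)\in F\}$. A marking is a multiset over $P$ (a function $P\to\mathbb N$); sets of places are identified with bags of multiplicity one, $+,-,\le$ are pointwise, and $k.m$ is the sum of $k$ copies of $m$. Transition $t$ is enabled at $m$ iff $\bullet t\le m$, firing gives $m-\bullet t+t\bullet$, and $m\xrightarrow{*}m'$ denotes reachability by a finite (possibly empty) firing sequence. A pWF net is $(P,T,F,I,O)$ with $(P,T,F)$ a Petri net, $I,O\subseteq P$ non-empty, every node reachable by a directed path from some node of $I$, and some node of $O$ reachable from every node. Soundness. A pWF net is $k$-sound if for every marking $m$ with $k.I\xrightarrow{*}m$ we have $m\xrightarrow{*}k.O$; $*$-sound if $k$-sound for all $k\ge1$. It is substitution-sound (sub-sound) if for all integers $k\ge k'\ge 0$ and every marking $m'$: if $k.I\xrightarrow{*}m'+k'.O$ then $m'\xrightarrow{*}(k-k').O$. *)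

(* Defs.v *)
From mathcomp Require Import all_boot.
Set Implicit Arguments. Unset Strict Implicit. Unset Printing Implicit Defensive.

(* A Petri net (P,T,F): places and transitions are finite types (so P and T
   are automatically disjoint as nodes of the sum type P + T); the flow
   relation F is split into F ∩ (P×T) (= pre) and F ∩ (T×P) (= post). *)
Record petri_net := PetriNet {
  place : finType;
  trans : finType;
  pre  : place -> trans -> bool;
  post : trans -> place -> bool
}.

Section Net.
Variable N : petri_net.
Local Notation P := (place N).
Local Notation T := (trans N).

Definition node := (P + T)%type.
Definition flow : rel node := fun x y =>
  match x, y with
  | inl p, inr t => pre p t
  | inr t, inl p => post t p
  | _, _ => false
  end.

Definition marking := {ffun P -> nat}.
Definition madd (m m' : marking) : marking := [ffun p => m p + m' p].
Definition msub (m m' : marking) : marking := [ffun p => m p - m' p].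
Definition mle (m m' : marking) : bool := [forall p, m p <= m' p].
Definition mscale (k : nat) (m : marking) : marking := [ffun p => k * m p].
Definition bag_of (A : {set P}) : marking := [ffun p => nat_of_bool (p \in A)].
Definition preset (t : T) : marking := [ffun p => nat_of_bool (pre p t)].
Definition postset (t : T) : marking := [ffun p => nat_of_bool (post t p)].

Definition enabled (m : marking) (t : T) : bool := mle (preset t) m.
Definition fire_step (m m' : marking) : Prop :=
  exists t, enabled m t /\ m' = madd (msub m (preset t)) (postset t).

Inductive reach : marking -> marking -> Prop :=
  | reach_refl m : reach m m
  | reach_step m m' m'' : fire_step m m' -> reach m' m'' -> reach m m''.

Definition is_pWF (I O : {set P}) : Prop :=
  I != set0 /\ O != set0 /\
  (forall x : node, exists2 i, i \in I & connect flow (inl i) x) /\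
  (forall x : node, exists2 o, o \in O & connect flow x (inl o)).

Definition k_sound (I O : {set P}) (k : nat) : Prop :=
  forall m, reach (mscale k (bag_of I)) m -> reach m (mscale k (bag_of O)).

Definition star_sound (I O : {set P}) : Prop :=
  forall k, 1 <= k -> k_sound I O k.

Definition sub_sound (I O : {set P}) : Prop :=
  forall (k k' : nat) (m' : marking), k' <= k ->
    reach (mscale k (bag_of I)) (madd m' (mscale k' (bag_of O))) ->
    reach m' (mscale (k - k') (bag_of O)).

End Net.

(* Main.v *)
Require Import Defs.
From mathcomp Require Import all_boot.
From mathcomp Require Import zify.

Section Aux.
Variable N : petri_net.

Lemma reach_strip (O : {set place N}) (hO : forall p t, p \in O -> ~~ pre p t)
  (z : marking N) (hz : forall p, p \notin O -> z p = 0) :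
  forall a x, reach a x -> forall m, a = madd m z ->
  exists y, x = madd y z /\ reach m y.
Proof.
move=> a x; elim => [a0|a0 a1 a2 [t [he ->]] _ IH] m ea.
  by exists m; split => //; constructor.
have key : forall p, preset t p = 0 \/ z p = 0.
  move=> p; case: (boolP (p \in O)) => hp.
    by left; rewrite ffunE; move: (hO p t hp); case: (pre p t).
  by right; apply: hz.
have hen : forall p, preset t p <= m p.
  move=> p; move/forallP: he => /(_ p); move: (key p); rewrite ea !ffunE; lia.
have e2 : madd (msub a0 (preset t)) (postset t)
          = madd (madd (msub m (preset t)) (postset t)) z.
  apply/ffunP => p; rewrite ea !ffunE.
  move: (hen p) (key p); rewrite !ffunE; lia.
have [y [-> hy]] := IH _ e2.
exists y; split => //; apply: reach_step hy; exists t; split => //.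
by apply/forallP.
Qed.

Lemma reach_zero (I O : {set place N}) : is_pWF I O ->
  forall a x, reach a x -> a = mscale 0 (bag_of I) -> x = a.
Proof.
move=> [_ [_ [hI _]]] a x; elim => [//|a0 a1 a2 [t [he _]] _ _ ea].
exfalso; have [i _ /connectP [s hp hl]] := hI (inr t).
case/lastP: s hp hl => [//|s y]; rewrite rcons_path last_rcons => /andP[_ hf] ey.
move: hf; rewrite -ey; case el: (last (inl i) s) => [p|t'] //= hpt.
move/forallP: he => /(_ p); rewrite ea !ffunE hpt /=; lia.
Qed.
End Aux.

Theorem mainTheorem6 (N : petri_net) (I O : {set place N}) :
  is_pWF I O ->
  (forall (p : place N) (t : trans N), p \in O -> ~~ pre p t) ->
  (star_sound I O <-> sub_sound I O).
Proof.
move=> hW hO; split.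
- move=> hs k k' m' hk hr.
  case: k hk hr => [|k] hk hr.
    have k0 : k' = 0 by lia.
    subst k'.
    have := @reach_zero N I O hW _ _ hr erefl => e.
    have -> : m' = mscale (0 - 0) (bag_of O).
      apply/ffunP => p; move/ffunP: e => /(_ p); rewrite !ffunE; lia.
    by constructor.
  have h2 := hs _ (isT : 1 <= k.+1) _ hr.
  have hz : forall p, p \notin O -> mscale k' (bag_of O) p = 0.
    by move=> p hp; rewrite !ffunE (negbTE hp) muln0.
  have [y [ey hy]] := @reach_strip N O hO _ hz _ _ h2 _ erefl.
  suff -> : mscale (k.+1 - k') (bag_of O) = y by [].
  apply/ffunP => p; move/ffunP: ey => /(_ p); rewrite !ffunE.
  case: (p \in O) => /=; lia.
- move=> hs k hk m hr.
  have := hs k 0 m (leq0n k).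
  have -> : madd m (mscale 0 (bag_of O)) = m by apply/ffunP => p; rewrite !ffunE; lia.
  by rewrite subn0 => /(_ hr).
Qed.
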